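(* Let $M$ be a $\mathscr{D}(R,V)$-module. Set $I=\mathrm{Ann}_R(M)$ and $J = (I:\pi^{\infty}) := \{a\in R\mid a\pi^m\in I \text{ for some integer } m \geq 0\}$. Then $J$ is a $\mathscr{D}(R,V)$-submodule of $R$.
   Context: Let $(V, \pi V, k)$ be a DVR of mixed characteristic $(0,p)$ (i.e. $V$ has characteristic zero, maximal ideal generated by $\pi$, and residue field $k$ of characteristic $p>0$), and let $R$ be either $V[[x_1, \ldots, x_n]]$ or $V[x_1, \ldots, x_n]$ for some $n \geq 0$. $\mathscr{D}(R,V)$ denotes the ring of $V$-linear differential operators on $R$, and $\mathscr{D}(R,V)$-modules are left modules over it. *)

(* Defs.v *)
From HB Require Import structures.
From mathcomp Require Import all_boot all_order all_algebra zify.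
From mathcomp Require Import boolp.
Set Implicit Arguments. Unset Strict Implicit. Unset Printing Implicit Defensive.
Import GRing.Theory.
Local Open Scope ring_scope.

Section PSer.
Variable A : comNzRingType.
Definition pser : Type := nat -> A.
HB.instance Definition _ := Choice.on pser.

Definition ps_zero : pser := fun _ => 0.
Definition ps_opp (f : pser) : pser := fun k => - f k.
Definition ps_add (f g : pser) : pser := fun k => f k + g k.
Lemma ps_addA : associative ps_add.
Proof. by move=> f g h; apply/funext => k; rewrite /ps_add addrA. Qed.
Lemma ps_addC : commutative ps_add.
Proof. by move=> f g; apply/funext => k; rewrite /ps_add addrC. Qed.
Lemma ps_add0 : left_id ps_zero ps_add.
Proof. by move=> f; apply/funext => k; rewrite /ps_add /ps_zero add0r. Qed.
Lemma ps_addN : left_inverse ps_zero ps_opp ps_add.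
Proof. by move=> f; apply/funext => k; rewrite /ps_add /ps_opp /ps_zero addNr. Qed.
HB.instance Definition _ := GRing.isZmodule.Build pser ps_addA ps_addC ps_add0 ps_addN.

Definition ps_one : pser := fun k => (k == 0)%:R.
Definition ps_mul (f g : pser) : pser :=
  fun k => \sum_(i < k.+1) f i * g (k - i)%N.

Lemma ps_mulE (f g : pser) k N : (k < N)%N ->
  ps_mul f g k = \sum_(i < N) \sum_(j < N | (i + j == k)%N) f i * g j.
Proof.
move=> kN; rewrite /ps_mul.
transitivity (\sum_(i < N | (i < k.+1)%N) f i * g (k - i)%N).
  by rewrite (big_ord_widen _ (fun i : nat => f i * g (k - i)%N) kN).
rewrite [RHS](bigID (fun i : 'I_N => (i < k.+1)%N)) /= [X in _ + X]big1 ?addr0.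
  apply: eq_bigr => i ik.
  have H : (k - i < N)%N by lia.
  rewrite (big_pred1 (Ordinal H)) // => j /=.
  by rewrite -(inj_eq val_inj) /=; apply/eqP/eqP; lia.
move=> i; rewrite -leqNgt => ki; rewrite big_pred0 // => j; apply/eqP; lia.
Qed.

Lemma ps_mulC : commutative ps_mul.
Proof.
move=> f g; apply/funext => k; rewrite !(ps_mulE _ _ (ltnSn k)).
rewrite (exchange_big_dep xpredT) //=.
apply: eq_bigr => i _; apply: eq_big => j; first by rewrite addnC.
by rewrite mulrC.
Qed.

Lemma collapse k N (i j l : nat) (X : A) : (k < N)%N ->
  \sum_(m < N | (i + m == k)%N && (j + l == m)%N) X =
  if (i + j + l == k)%N then X else 0.
Proof.
move=> kN; case: ifP => E.
  have H : (j + l < N)%N by move/eqP: E; lia.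
  rewrite (big_pred1 (Ordinal H)) // => m /=.
  apply/andP/eqP => [[/eqP E1 /eqP E2]|->]; first by apply: val_inj => /=; lia.
  by split; apply/eqP => //=; move/eqP: E; lia.
rewrite big_pred0 // => m; apply/andP => -[/eqP E1 /eqP E2]; move/negbT/eqP: E; lia.
Qed.

Lemma ps_mulA : associative ps_mul.
Proof.
move=> f g h; apply/funext => k; set N := k.+1.
have kN : (k < N)%N by [].
rewrite (ps_mulE _ _ kN) (ps_mulC (ps_mul f g)) (ps_mulE _ _ kN).
transitivity (\sum_(i < N) \sum_(j < N) \sum_(l < N)
   if (i + j + l == k)%N then f i * g j * h l else 0).
  apply: eq_bigr => i _.
  rewrite (eq_bigr (fun m : 'I_N => \sum_(j < N) \sum_(l < N | (j + l == m)%N) f i * (g j * h l))); last first.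
    move=> m /eqP im; rewrite (ps_mulE _ _ (_ : (m < N)%N)); last by lia.
    by rewrite mulr_sumr; apply: eq_bigr => j _; rewrite mulr_sumr.
  rewrite exchange_big /=; apply: eq_bigr => j _.
  rewrite (exchange_big_dep (fun _ => true)) //=; apply: eq_bigr => l _.
  by rewrite (collapse _ _ _ _ kN) mulrA.
symmetry.
transitivity (\sum_(m < N) \sum_(i < N) \sum_(j < N)
   if (m + i + j == k)%N then h m * (f i * g j) else 0).
  apply: eq_bigr => m _.
  rewrite (eq_bigr (fun l : 'I_N => \sum_(i < N) \sum_(j < N | (i + j == l)%N) h m * (f i * g j))); last first.
    move=> l /eqP ml; rewrite (ps_mulE _ _ (_ : (l < N)%N)); last by lia.
    by rewrite mulr_sumr; apply: eq_bigr => i _; rewrite mulr_sumr.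
  rewrite exchange_big /=; apply: eq_bigr => i _.
  rewrite (exchange_big_dep (fun _ => true)) //=; apply: eq_bigr => j _.
  by rewrite (collapse _ _ _ _ kN).
rewrite exchange_big /=; apply: eq_bigr => i _.
rewrite exchange_big /=; apply: eq_bigr => j _.
apply: eq_bigr => m _.
have -> : (m + i + j = i + j + m)%N by lia.
by case: ifP => // _; rewrite mulrC.
Qed.

Lemma ps_mul1 : left_id ps_one ps_mul.
Proof.
move=> f; apply/funext => k; rewrite /ps_mul big_ord_recl /= /ps_one /= mul1r subn0.
by rewrite big1 ?addr0 // => i _; rewrite mul0r.
Qed.

Lemma ps_mulDl : left_distributive ps_mul ps_add.
Proof.
move=> f g h; apply/funext => k; rewrite /ps_mul /ps_add -big_split /=.
by apply: eq_bigr => i _; rewrite mulrDl.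
Qed.

Lemma ps_one_neq0 : ps_one != ps_zero.
Proof.
apply/eqP => /(congr1 (fun f : pser => f 0%N)); rewrite /ps_one /ps_zero /=.
by move/eqP; rewrite oner_eq0.
Qed.

HB.instance Definition _ := GRing.Zmodule_isComNzRing.Build pser
  ps_mulA ps_mulC ps_mul1 ps_mulDl ps_one_neq0.

Definition psC (a : A) : pser := fun k => if k is 0%N then a else 0.
End PSer.

Unset Implicit Arguments.

(* The rings R = V[x_1,...,x_n] and R = V[[x_1,...,x_n]], realised as        *)
(* iterated one-variable polynomial / power series rings over V, together    *)
(* with the structure map V -> R.                                           *)

Fixpoint polyn (V : comNzRingType) (n : nat) : comNzRingType :=
  if n is n'.+1 then ({poly polyn V n'} : comNzRingType) else V.

Fixpoint polynC (V : comNzRingType) (n : nat) : V -> polyn V n :=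
  match n return V -> polyn V n with
  | 0 => fun v => v
  | n'.+1 => fun v => (polynC V n' v)%:P
  end.

Fixpoint psern (V : comNzRingType) (n : nat) : comNzRingType :=
  if n is n'.+1 then (pser (psern V n') : comNzRingType) else V.

Fixpoint psernC (V : comNzRingType) (n : nat) : V -> psern V n :=
  match n return V -> psern V n with
  | 0 => fun v => v
  | n'.+1 => fun v => psC (psernC V n' v)
  end.

Variant ring_kind := PolyRing | PowerSeriesRing.

Definition Rring (b : ring_kind) (V : comNzRingType) (n : nat) : comNzRingType :=
  match b with PolyRing => polyn V n | PowerSeriesRing => psern V n end.

Definition Rmap (b : ring_kind) (V : comNzRingType) (n : nat) : V -> Rring b V n :=
  match b return V -> Rring b V n with
  | PolyRing => polynC V n
  | PowerSeriesRing => psernC V n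
  end.

Definition is_DVR_with_uniformizer (V : idomainType) (pi : V) : Prop :=
  [/\ pi != 0, pi \isn't a GRing.unit &
      forall a : V, a != 0 ->
        exists u : V, exists k : nat, u \is a GRing.unit /\ a = u * pi ^+ k].

Definition char_zero (V : idomainType) : Prop :=
  forall m : nat, (0 < m)%N -> (m%:R : V) != 0.

(* the residue field V / pi V has characteristic p *)
Definition residue_char (V : idomainType) (pi : V) (p : nat) : Prop :=
  exists c : V, (p%:R : V) = c * pi.

Section DiffOps.
Variables (V : comNzRingType) (R : comNzRingType) (iota : V -> R).

Definition Vlinear (d : R -> R) : Prop :=
  (forall x y, d (x + y) = d x + d y) /\
  (forall (v : V) x, d (iota v * x) = iota v * d x).

Fixpoint diffop_ord (k : nat) (d : R -> R) : Prop :=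
  Vlinear d /\
  match k with
  | 0 => forall r x, d (r * x) = r * d x
  | k'.+1 => forall r, diffop_ord k' (fun x => d (r * x) - r * d x)
  end.

Definition diffop (d : R -> R) : Prop := exists k, diffop_ord k d.

Definition mulop (r : R) : R -> R := fun x => r * x.

(* A left D(R,V)-module: an abelian group M with an action of the ring
   D(R,V) (whose sum is pointwise sum, product is composition, unit is id). *)
Record DModule := {
  dm_car :> zmodType;
  dm_act : (R -> R) -> dm_car -> dm_car;
  dm_act_addm : forall d, diffop d ->
    forall m m', dm_act d (m + m') = dm_act d m + dm_act d m';
  dm_act_addd : forall d e, diffop d -> diffop e ->
    forall m, dm_act (fun x => d x + e x) m = dm_act d m + dm_act e m;
  dm_act_comp : forall d e, diffop d -> diffop e ->
    forall m, dm_act (fun x => d (e x)) m = dm_act d (dm_act e m);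
  dm_act_id : forall m, dm_act (fun x => x) m = m
}.

Definition annihilator (M : DModule) : R -> Prop :=
  fun a => forall m : M, dm_act M (mulop a) m = 0.

Definition saturation (pi : V) (I : R -> Prop) : R -> Prop :=
  fun a => exists m : nat, I (a * iota pi ^+ m).

Definition is_D_submodule (S : R -> Prop) : Prop :=
  [/\ S 0,
      (forall a b, S a -> S b -> S (a + b)) &
      (forall d a, diffop d -> S a -> S (d a))].

End DiffOps.

Arguments Vlinear {V R} iota d.
Arguments diffop_ord {V R} iota k d.
Arguments diffop {V R} iota d.
Arguments mulop {R} r x.
Arguments DModule {V R} iota.
Arguments dm_act {V R iota} _ _ _.
Arguments annihilator {V R iota} M a.
Arguments saturation {V R} iota pi I a.
Arguments is_D_submodule {V R} iota S.

(* Main.v *)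
Require Import Defs.
From HB Require Import structures.
From mathcomp Require Import all_boot all_order all_algebra.
From mathcomp Require Import boolp ring.
Set Implicit Arguments. Unset Strict Implicit. Unset Printing Implicit Defensive.
Import GRing.Theory.
Local Open Scope ring_scope.


Section Gen.
Variables (V R : comNzRingType) (iota : V -> R).

Definition ad (r : R) (f : R -> R) : R -> R := fun y => f (r * y) - r * f y.

Lemma ord_Vlinear k d : diffop_ord iota k d -> Vlinear iota d.
Proof. by case: k => [[]|k []]. Qed.

Lemma ord_succ k d : diffop_ord iota k.+1 d <->
  Vlinear iota d /\ forall r, diffop_ord iota k (ad r d).
Proof. by []. Qed.

Lemma lin0 d : Vlinear iota d -> d 0 = 0.
Proof.
case=> Ha _; have := Ha 0 0; rewrite addr0 => /(congr1 (fun z => z - d 0)).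
by rewrite addrK subrr => /esym.
Qed.

Lemma linN d x : Vlinear iota d -> d (- x) = - d x.
Proof.
move=> H; have := H.1 x (- x); rewrite subrr (lin0 H) => /esym/eqP.
by rewrite addrC addr_eq0 => /eqP.
Qed.

Lemma linB d x y : Vlinear iota d -> d (x - y) = d x - d y.
Proof. by move=> H; rewrite H.1 linN. Qed.

Lemma linMn d x n : Vlinear iota d -> d (x *+ n) = d x *+ n.
Proof.
move=> H; elim: n => [|n IH]; first by rewrite !mulr0n lin0.
by rewrite !mulrS H.1 IH.
Qed.

Lemma lin_sum d (I : Type) (s : seq I) (F : I -> R) : Vlinear iota d ->
  d (\sum_(i <- s) F i) = \sum_(i <- s) d (F i).
Proof.
move=> H; elim: s => [|a s IH]; first by rewrite !big_nil lin0.
by rewrite !big_cons H.1 IH.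
Qed.

Lemma zero_ord k : diffop_ord iota k (fun _ => 0).
Proof.
have HV : Vlinear iota (fun _ : R => 0) by split => *; rewrite ?addr0 ?mulr0.
elim: k => [|k IH]; first by split => // *; rewrite mulr0.
split=> // r; change (diffop_ord iota k (ad r (fun _ => 0))).
by have -> : ad r (fun _ => 0) = (fun _ => 0) by apply/funext => y; rewrite /ad mulr0 subr0.
Qed.

Lemma ad_ord0 d r : diffop_ord iota 0 d -> ad r d = (fun _ => 0).
Proof. by case=> _ H; apply/funext => y; rewrite /ad H subrr. Qed.

Lemma ord_mono k d : diffop_ord iota k d -> diffop_ord iota k.+1 d.
Proof.
elim: k d => [|k IH] d Hd.
  split; first exact: ord_Vlinear Hd.
  by move=> r; change (diffop_ord iota 0 (ad r d)); rewrite ad_ord0 //; apply: zero_ord.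
split; first exact: ord_Vlinear Hd.
by move=> r; apply: IH; apply: Hd.2.
Qed.

Lemma ord_le k l d : (k <= l)%N -> diffop_ord iota k d -> diffop_ord iota l d.
Proof.
move=> /subnKC <-; elim: (l - k)%N => [|m IH]; first by rewrite addn0.
by move=> Hd; rewrite addnS; apply: ord_mono; apply: IH.
Qed.

Lemma Vlin_add d e : Vlinear iota d -> Vlinear iota e ->
  Vlinear iota (fun y => d y + e y).
Proof.
move=> [Hd1 Hd2] [He1 He2]; split=> *.
  by rewrite Hd1 He1 addrACA.
by rewrite Hd2 He2 mulrDr.
Qed.

Lemma Vlin_comp d e : Vlinear iota d -> Vlinear iota e ->
  Vlinear iota (fun y => d (e y)).
Proof.
move=> [Hd1 Hd2] [He1 He2]; split=> *; first by rewrite He1 Hd1.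
by rewrite He2 Hd2.
Qed.

Lemma ord_add k d e : diffop_ord iota k d -> diffop_ord iota k e ->
  diffop_ord iota k (fun y => d y + e y).
Proof.
elim: k d e => [|k IH] d e Hd He.
  split; first by apply: Vlin_add; [apply: ord_Vlinear Hd|apply: ord_Vlinear He].
  by move=> r x; rewrite Hd.2 He.2 mulrDr.
split; first by apply: Vlin_add; [apply: ord_Vlinear Hd|apply: ord_Vlinear He].
move=> r; change (diffop_ord iota k (ad r (fun y => d y + e y))).
have -> : ad r (fun y => d y + e y) = (fun y => ad r d y + ad r e y).
  by apply/funext => y; rewrite /ad mulrDr opprD addrACA.
by apply: IH; [apply: Hd.2|apply: He.2].
Qed.

Lemma ord_comp0l k d e : diffop_ord iota 0 d -> diffop_ord iota k e ->
  diffop_ord iota k (fun y => d (e y)).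
Proof.
move=> Hd; elim: k e => [|k IH] e He.
  split; first by apply: Vlin_comp; [apply: ord_Vlinear Hd|apply: ord_Vlinear He].
  by move=> r x; rewrite He.2 Hd.2.
split; first by apply: Vlin_comp; [apply: ord_Vlinear Hd|apply: ord_Vlinear He].
move=> r; change (diffop_ord iota k (ad r (fun y => d (e y)))).
have -> : ad r (fun y => d (e y)) = (fun y => d (ad r e y)).
  by apply/funext => y; rewrite /ad (linB _ _ (ord_Vlinear Hd)) Hd.2.
by apply: IH; apply: He.2.
Qed.

Lemma ord_comp0r k d e : diffop_ord iota k d -> diffop_ord iota 0 e ->
  diffop_ord iota k (fun y => d (e y)).
Proof.
move=> + He; elim: k d => [|k IH] d Hd.
  split; first by apply: Vlin_comp; [apply: ord_Vlinear Hd|apply: ord_Vlinear He].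
  by move=> r x; rewrite He.2 Hd.2.
split; first by apply: Vlin_comp; [apply: ord_Vlinear Hd|apply: ord_Vlinear He].
move=> r; change (diffop_ord iota k (ad r (fun y => d (e y)))).
have -> : ad r (fun y => d (e y)) = (fun y => ad r d (e y)).
  by apply/funext => y; rewrite /ad He.2.
by apply: IH; apply: Hd.2.
Qed.

Lemma ord_comp k l d e : diffop_ord iota k d -> diffop_ord iota l e ->
  diffop_ord iota (k + l) (fun y => d (e y)).
Proof.
move Hs : (k + l)%N => s; elim: s k l d e Hs => [|s IH] k l d e Hs Hd He.
  by move: Hs => /eqP; rewrite addn_eq0 => /andP[/eqP Hk /eqP Hl]; subst; apply: ord_comp0l.
case: k Hs Hd => [|k] Hs Hd; first by rewrite -Hs; apply: ord_comp0l.
case: l Hs He => [|l] Hs He; first by rewrite -Hs addn0; apply: ord_comp0r.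
split; first by apply: Vlin_comp; [apply: ord_Vlinear Hd|apply: ord_Vlinear He].
move=> r; change (diffop_ord iota s (ad r (fun y => d (e y)))).
have -> : ad r (fun y => d (e y)) = (fun y => d (ad r e y) + ad r d (e y)).
  apply/funext => y; rewrite /ad (linB _ _ (ord_Vlinear Hd)).
  by rewrite addrA subrK.
move: Hs; rewrite addSn => -[Hs].
apply: ord_add.
  by apply: (IH k.+1 l) => //; [rewrite addSnnS|apply: He.2].
by apply: (IH k l.+1) => //; apply: Hd.2.
Qed.

Lemma mulop_ord r : diffop_ord iota 0 (mulop r).
Proof.
split; first by split=> *; rewrite /mulop ?mulrDr // mulrCA.
by move=> s x; rewrite /mulop mulrCA.
Qed.

Lemma diffop_add d e : diffop iota d -> diffop iota e -> diffop iota (fun y => d y + e y).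
Proof.
move=> [k Hd] [l He]; exists (maxn k l); apply: ord_add.
  by apply: (ord_le (leq_maxl k l) Hd).
by apply: (ord_le (leq_maxr k l) He).
Qed.

Lemma diffop_comp d e : diffop iota d -> diffop iota e -> diffop iota (fun y => d (e y)).
Proof. by move=> [k Hd] [l He]; exists (k + l)%N; apply: ord_comp. Qed.

Lemma diffop_mulop r : diffop iota (mulop r).
Proof. by exists 0%N; apply: mulop_ord. Qed.

Lemma diffop_zero : diffop iota (fun _ => 0).
Proof. by exists 0%N; apply: zero_ord. Qed.

End Gen.


Section Mod.
Variables (V R : comNzRingType) (iota : V -> R) (M : DModule iota).

Lemma addm d : diffop iota d -> forall m m' : M, dm_act M d (m + m') = dm_act M d m + dm_act M d m'.
Proof. exact: (@dm_act_addm V R iota M d). Qed.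
Lemma addd d e : diffop iota d -> diffop iota e ->
  forall m : M, dm_act M (fun x => d x + e x) m = dm_act M d m + dm_act M e m.
Proof. exact: (@dm_act_addd V R iota M d e). Qed.
Lemma compd d e : diffop iota d -> diffop iota e ->
  forall m : M, dm_act M (fun x => d (e x)) m = dm_act M d (dm_act M e m).
Proof. exact: (@dm_act_comp V R iota M d e). Qed.

Definition inT (f : R -> R) := diffop iota f /\ forall m : M, dm_act M f m = 0.

Lemma self_add0 (G : zmodType) (a : G) : a = a + a -> a = 0.
Proof. by move/(congr1 (fun z => z - a)); rewrite addrK subrr => /esym. Qed.

Lemma act0 d : diffop iota d -> dm_act M d 0 = 0.
Proof. by move=> Hd; apply: self_add0; rewrite -addm // addr0. Qed.

Lemma act_zero (m : M) : dm_act M (fun _ => 0) m = 0.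
Proof.
have H := addd (diffop_zero iota) (diffop_zero iota) m.
have E : (fun _ : R => (0 : R) + 0) = (fun _ => 0) by apply/funext => y; rewrite addr0.
by rewrite E in H; apply: self_add0.
Qed.

Lemma inT_zero : inT (fun _ => 0).
Proof. by split; [apply: diffop_zero|apply: act_zero]. Qed.

Lemma inT_add f g : inT f -> inT g -> inT (fun y => f y + g y).
Proof.
move=> [Hf Af] [Hg Ag]; split; first exact: diffop_add.
by move=> m; rewrite addd // Af Ag addr0.
Qed.

Lemma inT_compl d f : diffop iota d -> inT f -> inT (fun y => d (f y)).
Proof.
move=> Hd [Hf Af]; split; first exact: diffop_comp.
by move=> m; rewrite compd // Af act0.
Qed.

Lemma inT_compr f d : inT f -> diffop iota d -> inT (fun y => f (d y)).
Proof.
move=> [Hf Af] Hd; split; first exact: diffop_comp.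
by move=> m; rewrite compd // Af.
Qed.

Lemma ad_eq (r : R) (f : R -> R) : ad r f = (fun y => f (mulop r y) + mulop (- r) (f y)).
Proof. by apply/funext => y; rewrite /ad /mulop mulNr. Qed.

Lemma inT_ad r f : inT f -> inT (ad r f).
Proof.
move=> Hf; rewrite ad_eq; apply: inT_add.
  by apply: inT_compr => //; apply: diffop_mulop.
by apply: inT_compl => //; apply: diffop_mulop.
Qed.

Lemma inT_sum K (F : nat -> R -> R) : (forall j, inT (F j)) ->
  inT (fun y => \sum_(j < K) F j y).
Proof.
move=> HF; elim: K => [|K IH].
  have -> : (fun y => \sum_(j < 0) F j y) = (fun _ => 0).
    by apply/funext => y; rewrite big_ord0.
  exact: inT_zero.
have -> : (fun y => \sum_(j < K.+1) F j y) = (fun y => \sum_(j < K) F j y + F K y).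
  by apply/funext => y; rewrite big_ord_recr.
exact: inT_add.
Qed.

Lemma inT_ann a : inT (mulop a) <-> annihilator M a.
Proof. by split; [case|split=> //; apply: diffop_mulop]. Qed.

End Mod.

Section Phi.
Variables (V R : comNzRingType) (iota : V -> R).
Variables (x : R) (D : R -> R).
Hypotheses (HDo : diffop iota D) (HDx : forall y, D (x * y) = x * D y + y)
  (HD1 : D 1 = 0).

Definition com (z : R) (f : R -> R) := forall y, f (z * y) = z * f y.

Definition A (e : R -> R) j := iter j (ad x) e.

Definition Phi k e : R -> R := fun y =>
  \sum_(j < k.+1) ((-1) ^+ j *+ (k`! %/ j`!)) * A e j (iter j D y).

Lemma diffop_ad r f : diffop iota f -> diffop iota (ad r f).
Proof.
move=> Hf; rewrite (ad_eq r f); apply: diffop_add.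
  by apply: diffop_comp => //; apply: diffop_mulop.
by apply: diffop_comp => //; apply: diffop_mulop.
Qed.

Lemma diffop_A e j : diffop iota e -> diffop iota (A e j).
Proof. by move=> He; elim: j => [|j IH] //=; apply: diffop_ad. Qed.

Lemma diffop_lin f : diffop iota f -> Vlinear iota f.
Proof. by case=> k; apply: ord_Vlinear. Qed.

Lemma diffop_iter j : diffop iota (iter j D).
Proof.
elim: j => [|j IH].
  have -> : iter 0 D = mulop 1 by apply/funext => y; rewrite /mulop mul1r.
  exact: diffop_mulop.
by have -> : iter j.+1 D = (fun y => D (iter j D y)) by []; apply: diffop_comp.
Qed.

Lemma iterD_x j y : iter j D (x * y) = x * iter j D y + iter j.-1 D y *+ j.
Proof.
have HL := diffop_lin HDo.
elim: j => [|j IH]; first by rewrite /= mulr0n addr0.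
rewrite [LHS]/= IH HL.1 HDx (linMn _ _ HL).
case: j IH => [|j] IH; first by rewrite /= mulr0n !mulr1n addr0.
by rewrite /= !mulrS !addrA.
Qed.

Lemma A_S e j : A e j.+1 = ad x (A e j).
Proof. by []. Qed.

Lemma A_vanish k e : diffop_ord iota k e -> forall y, A e k.+1 y = 0.
Proof.
elim: k e => [|k IH] e He y.
  by rewrite /A /= /ad He.2 subrr.
by rewrite /A iterSr; apply: IH; apply: He.2.
Qed.


Lemma dvd_fact m n : (m <= n)%N -> (m`! %| n`!)%N.
Proof.
elim: n => [|n IH]; first by rewrite leqn0 => /eqP ->.
rewrite leq_eqVlt => /orP[/eqP -> //|]; rewrite ltnS => /IH H.
by rewrite factS dvdn_mull.
Qed.

Lemma fact_div i k : (i < k)%N -> (k`! %/ i.+1`! * i.+1 = k`! %/ i`!)%N.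
Proof.
move=> ik.
have Hd : (i.+1`! %| k`!)%N by exact: dvd_fact.
set q := (k`! %/ i.+1`!)%N.
have -> : k`! = (q * i.+1 * i`!)%N by rewrite -mulnA -factS /q divnK.
by rewrite mulnK // fact_gt0.
Qed.

Lemma Phi_x k e : diffop_ord iota k e -> forall y, Phi k e (x * y) = x * Phi k e y.
Proof.
move=> He y.
have De : diffop iota e by exists k.
have HA j := diffop_lin (diffop_A j De).
pose c := fun j => ((-1) ^+ j *+ (k`! %/ j`!)) : R.
pose a := fun j => A e j (iter j D y).
pose b := fun j => A e j.+1 (iter j D y).
pose g := fun j => A e j (iter j.-1 D y) *+ j.
have step : forall j, A e j (iter j D (x*y)) = x * a j + b j + g j.
  move=> j; rewrite iterD_x (HA j).1 (linMn _ _ (HA j)) /a /b /g A_S /ad.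
  ring.
rewrite /Phi (eq_bigr (fun j : 'I_k.+1 => x * (c j * a j) + (c j * b j + c j * g j))); last first.
  by move=> j _; rewrite step /c; ring.
rewrite big_split /= -mulr_sumr -[RHS]addr0; congr (_ + _).
rewrite big_split /= big_ord_recr /= big_ord_recl /=.
rewrite /b A_vanish // mulr0 addr0 /g mulr0n mulr0 add0r.
rewrite -big_split /=; apply: big1 => i _.
rewrite /bump leq0n add1n add0n.
set t := ad x _ _.
rewrite /c mulrnAr !mulrnAl -mulrnA fact_div //.
by rewrite exprS mulN1r mulNr mulNrn addrN.
Qed.

Lemma iterD1 j : iter j.+1 D 1 = 0.
Proof.
elim: j => [|j IH] //=; by rewrite -/(iter j.+1 D 1) IH (lin0 (diffop_lin HDo)).
Qed.

Lemma Phi_1 k e : diffop iota e -> Phi k e 1 = k`!%:R * e 1.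
Proof.
move=> De; rewrite /Phi big_ord_recl /= big1 ?addr0.
  by rewrite expr0 fact0 divn1.
move=> i _; rewrite add0n -/(iter i.+1 D 1) iterD1 (lin0 (diffop_lin (diffop_ad x (diffop_A i De)))) mulr0 //.
Qed.

Lemma com_A z e j : com z e -> com z (A e j).
Proof.
move=> He; elim: j => [|j IH] //= y.
by rewrite /ad mulrCA !IH mulrCA -mulrBr.
Qed.

Lemma com_iter z j : com z D -> com z (iter j D).
Proof. by move=> Hz; elim: j => [|j IH] //= y; rewrite !iterS IH Hz. Qed.

Lemma Phi_com z k e : com z D -> com z e -> com z (Phi k e).
Proof.
move=> HzD Hze y; rewrite /Phi mulr_sumr; apply: eq_bigr => j _.
by rewrite com_iter // com_A // mulrCA.
Qed.

End Phi.

Lemma Phi_inT (V R : comNzRingType) (iota : V -> R) (M : DModule iota) x D k e :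
  diffop iota D -> inT M e -> inT M (Phi x D k e).
Proof.
move=> HD He.
have HA : forall j, inT M (A x e j).
  by elim=> [|j IH] //=; apply: inT_ad.
pose F := fun (j : nat) (y : R) => mulop ((-1) ^+ j *+ (k`! %/ j`!)) (A x e j (iter j D y)).
have -> : Phi x D k e = fun y => \sum_(j < k.+1) F j y by [].
apply: (@inT_sum _ _ _ M k.+1 F) => j; apply: inT_compl; first exact: diffop_mulop.
by apply: inT_compr => //; apply: diffop_iter.
Qed.


Section Fin.
Variables (V R : comNzRingType) (iota : V -> R) (n : nat) (xs : nat -> R).

Definition Final := forall E : R -> R, Vlinear iota E ->
  (forall i, (i < n)%N -> com (xs i) E) -> forall r, E r = r * E 1.

Inductive plike : R -> Prop :=
| pl_c v : plike (iota v)
| pl_x i : (i < n)%N -> plike (xs i)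
| pl_add a b : plike a -> plike b -> plike (a + b)
| pl_mul a b : plike a -> plike b -> plike (a * b).

Definition approx := forall r N, exists P, exists g : nat -> R,
  plike P /\ r = P + \sum_(i < n) xs i ^+ N * g i.

Definition sep := forall h, (forall N, exists g : nat -> R,
  h = \sum_(i < n) xs i ^+ N * g i) -> h = 0.

Lemma plike_com E : Vlinear iota E -> (forall i, (i < n)%N -> com (xs i) E) ->
  forall r, plike r -> com r E.
Proof.
move=> HE Hx r; elim => {r} [v|i /Hx //|a b _ Ha _ Hb|a b _ Ha _ Hb] y.
- by rewrite HE.2.
- by rewrite mulrDl HE.1 Ha Hb mulrDl.
- by rewrite -mulrA Ha Hb mulrA.
Qed.

Lemma Final_all : (forall r, plike r) -> Final.
Proof.
move=> Hall E HE Hx r.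
by rewrite -{1}[r]mulr1 (plike_com HE Hx (Hall r)).
Qed.

Lemma com_exp (z : R) (E : R -> R) N : com z E -> com (z ^+ N) E.
Proof.
move=> Hz; elim: N => [|N IH] y; first by rewrite !expr0 !mul1r.
by rewrite exprS -mulrA Hz IH mulrA.
Qed.

Lemma Final_sep : approx -> sep -> Final.
Proof.
move=> Hap Hsep E HE Hx r.
apply/eqP; rewrite -subr_eq0; apply/eqP; apply: Hsep => N.
have [P [g [HP ->]]] := Hap r N.
exists (fun i => E (g i) - g i * E 1).
rewrite HE.1 (lin_sum _ _ HE) -[P in E P]mulr1 (plike_com HE Hx HP).
rewrite mulrDl opprD addrACA subrr add0r mulr_suml -sumrB.
apply: eq_bigr => i _.
by rewrite (com_exp _ (Hx i (ltn_ord i))) mulrBr mulrA.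
Qed.

End Fin.

Section Main.
Variables (V R : comNzRingType) (iota : V -> R) (M : DModule iota).

Lemma ann_ad a d : annihilator M a -> diffop iota d -> inT M (ad a d).
Proof.
move=> Ha Hd; rewrite ad_eq; apply: inT_add.
  by apply: inT_compl => //; apply/inT_ann.
apply: inT_compr => //; apply/inT_ann => m.
have -> : mulop (- a) = (fun y => mulop (- 1) (mulop a y)).
  by apply/funext => y; rewrite /mulop mulrA mulN1r.
by rewrite compd ?Ha ?act0 //; apply: diffop_mulop.
Qed.

Lemma ann_mull r a : annihilator M a -> annihilator M (r * a).
Proof.
move=> Ha m.
have -> : mulop (r * a) = (fun y => mulop r (mulop a y)).
  by apply/funext => y; rewrite /mulop mulrA.
by rewrite compd ?Ha ?act0 //; apply: diffop_mulop.
Qed.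

Lemma ann_add a b : annihilator M a -> annihilator M b -> annihilator M (a + b).
Proof.
move=> Ha Hb m.
have -> : mulop (a + b) = (fun y => mulop a y + mulop b y).
  by apply/funext => y; rewrite /mulop mulrDl.
by rewrite addd ?Ha ?Hb ?addr0 //; apply: diffop_mulop.
Qed.

Lemma ann_0 : annihilator M 0.
Proof.
move=> m; have -> : mulop (0 : R) = (fun _ => 0) by apply/funext => y; rewrite /mulop mul0r.
exact: act_zero.
Qed.

Variables (n : nat) (xs : nat -> R) (ds : nat -> R -> R).
Hypotheses (Hdiff : forall i, (i < n)%N -> diffop iota (ds i))
  (Hleib : forall i, (i < n)%N -> forall a b, ds i (a * b) = a * ds i b + ds i a * b)
  (Hx : forall i j, (i < n)%N -> (j < n)%N -> ds i (xs j) = (i == j)%:R)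
  (Hfin : Final iota n xs).

Lemma ds1 i : (i < n)%N -> ds i 1 = 0.
Proof. by move=> Hi; apply: self_add0; rewrite -{1}[1]mulr1 Hleib // mul1r mulr1. Qed.

Lemma chain i : (i <= n)%N -> forall e, inT M e -> exists E, inT M E /\
  (forall j, (j < i)%N -> com (xs j) E) /\ exists N, (0 < N)%N /\ E 1 = N%:R * e 1.
Proof.
elim: i => [|i IH] Hi e He.
  by exists e; split=> //; split=> //; exists 1%N; rewrite mul1r.
have [E [HE [Hc [N [HN HE1]]]]] := IH (ltnW Hi) e He.
have [k Hk] := HE.1.
have Hin : (i < n)%N by [].
have HDx : forall y, ds i (xs i * y) = xs i * ds i y + y.
  by move=> y; rewrite Hleib // Hx // eqxx mul1r.
exists (Phi (xs i) (ds i) k E); split; first by apply: Phi_inT => //; apply: Hdiff.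
split.
  move=> j; rewrite ltnS leq_eqVlt => /orP[/eqP ->|Hj].
    exact: (Phi_x (Hdiff Hin) HDx Hk).
  apply: Phi_com; last by apply: Hc.
  move=> y; rewrite Hleib // Hx //; last by apply: (ltn_trans Hj).
  by rewrite eq_sym (ltn_eqF Hj) mul0r addr0.
exists (N * k`!)%N; split; first by rewrite muln_gt0 HN fact_gt0.
rewrite (Phi_1 _ (Hdiff Hin) (ds1 Hin)); last by exists k.
by rewrite HE1 mulrA -natrM mulnC.
Qed.

Lemma key a d : annihilator M a -> diffop iota d ->
  exists N, (0 < N)%N /\ annihilator M (N%:R * d a).
Proof.
move=> Ha Hd.
have [E [HE [Hc [N [HN HE1]]]]] := chain (leqnn n) (ann_ad Ha Hd).
exists N; split=> //.
have HEm : E = mulop (E 1).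
  apply/funext => r; rewrite /mulop mulrC; apply: Hfin => //.
  by have [k Hk] := HE.1; apply: ord_Vlinear Hk.
have : annihilator M (E 1) by apply/inT_ann; rewrite -HEm.
rewrite HE1 /ad mulr1 => H.
rewrite (_ : N%:R * d a = N%:R * (d a - a * d 1) + d 1 * N%:R * a); last by ring.
by apply: ann_add => //; apply: ann_mull.
Qed.

End Main.


Section Gen2.
Variable V : comNzRingType.

Definition rm (A B : comNzRingType) (f : A -> B) :=
  [/\ f 1 = 1, forall a b, f (a + b) = f a + f b & forall a b, f (a * b) = f a * f b].

Lemma rm0 (A B : comNzRingType) (f : A -> B) : rm f -> f 0 = 0.
Proof. by case=> _ Ha _; apply: self_add0; rewrite -Ha addr0. Qed.

Lemma rm_nat (A B : comNzRingType) (f : A -> B) m : rm f -> f m%:R = m%:R.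
Proof.
move=> H; elim: m => [|m IH]; first exact: rm0.
by case: H => H1 Ha _; rewrite !mulrS Ha IH H1.
Qed.

Lemma rm_exp (A B : comNzRingType) (f : A -> B) a m : rm f -> f (a ^+ m) = f a ^+ m.
Proof.
move=> H; elim: m => [|m IH]; first by rewrite !expr0; case: H.
by case: H => _ _ Hm; rewrite !exprS Hm IH.
Qed.

Definition good_core (R : comNzRingType) (iota : V -> R) n (xs : nat -> R) (ds : nat -> R -> R) :=
  [/\ (forall i, (i < n)%N -> forall a b, ds i (a + b) = ds i a + ds i b),
      (forall i, (i < n)%N -> forall a b, ds i (a * b) = a * ds i b + ds i a * b),
      (forall i, (i < n)%N -> forall v, ds i (iota v) = 0) &
      (forall i j, (i < n)%N -> (j < n)%N -> ds i (xs j) = (i == j)%:R)].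

Lemma der_diffop (R : comNzRingType) (iota : V -> R) (D : R -> R) :
  (forall a b, D (a + b) = D a + D b) ->
  (forall a b, D (a * b) = a * D b + D a * b) ->
  (forall v, D (iota v) = 0) -> diffop iota D.
Proof.
move=> Ha Hl Hi; exists 1%N; split.
  by split=> // v y; rewrite Hl Hi mul0r addr0.
move=> r; change (diffop_ord iota 0 (ad r D)).
have -> : ad r D = mulop (D r) by apply/funext => y; rewrite /ad /mulop Hl addrC addKr mulrC.
exact: mulop_ord.
Qed.

Lemma der1 (R : comNzRingType) (D : R -> R) :
  (forall a b, D (a * b) = a * D b + D a * b) -> D 1 = 0.
Proof. by move=> Hl; apply: self_add0; rewrite -{1}[1]mulr1 Hl mul1r mulr1. Qed.

Lemma der0 (R : comNzRingType) (D : R -> R) :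
  (forall a b, D (a + b) = D a + D b) -> D 0 = 0.
Proof. by move=> Ha; apply: self_add0; rewrite -Ha addr0. Qed.

Lemma add_sum (R : comNzRingType) (D : R -> R) (I : Type) (s : seq I) (F : I -> R) :
  (forall a b, D (a + b) = D a + D b) -> D (\sum_(i <- s) F i) = \sum_(i <- s) D (F i).
Proof.
move=> Ha; elim: s => [|a s IH]; first by rewrite !big_nil der0.
by rewrite !big_cons Ha IH.
Qed.

Lemma plike_transfer (A B : comNzRingType) (iA : V -> A) (iB : V -> B) (C : A -> B)
  n (xs : nat -> A) (xs' : nat -> B) :
  rm C -> (forall v, C (iA v) = iB v) -> (forall j, (j < n)%N -> C (xs j) = xs' j.+1) ->
  forall a, plike iA n xs a -> plike iB n.+1 xs' (C a).
Proof.
move=> [_ Ha Hm] HiC HxC a; elim => {a} [v|j Hj|a b _ IHa _ IHb|a b _ IHa _ IHb].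
- by rewrite HiC; apply: pl_c.
- by rewrite HxC //; apply: pl_x.
- by rewrite Ha; apply: pl_add.
- by rewrite Hm; apply: pl_mul.
Qed.

Lemma plike0 (R : comNzRingType) (iota : V -> R) n xs : rm iota -> plike iota n xs 0.
Proof. by move=> H; rewrite -(rm0 H); apply: pl_c. Qed.

Lemma plike1 (R : comNzRingType) (iota : V -> R) n xs : rm iota -> plike iota n xs 1.
Proof. by case=> H _ _; rewrite -H; apply: pl_c. Qed.

Lemma plike_exp (R : comNzRingType) (iota : V -> R) n xs a m : rm iota ->
  plike iota n xs a -> plike iota n xs (a ^+ m).
Proof.
move=> H Ha; elim: m => [|m IH]; first by rewrite expr0; apply: plike1.
by rewrite exprS; apply: pl_mul.
Qed.

Lemma plike_sum (R : comNzRingType) (iota : V -> R) n xs (I : Type) (s : seq I) (F : I -> R) :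
  rm iota -> (forall i, plike iota n xs (F i)) -> plike iota n xs (\sum_(i <- s) F i).
Proof.
move=> H HF; elim: s => [|a s IH]; first by rewrite big_nil; apply: plike0.
by rewrite big_cons; apply: pl_add.
Qed.

End Gen2.

Section PolyStep.
Variables (V A : comNzRingType) (iA : V -> A) (n : nat) (xs : nat -> A) (ds : nat -> A -> A).
Hypotheses (Hrm : rm iA) (Hcore : good_core iA n xs ds) (Hall : forall r, plike iA n xs r).

Definition iB : V -> {poly A} := fun v => (iA v)%:P.
Definition xsB : nat -> {poly A} := fun i => if i is i'.+1 then (xs i')%:P else 'X.
Definition liftp (D : A -> A) (p : {poly A}) : {poly A} := map_poly D p.
Definition dsB : nat -> {poly A} -> {poly A} :=
  fun i => if i is i'.+1 then liftp (ds i') else deriv.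

Lemma rm_polyC : rm (fun a : A => a%:P).
Proof. by split; [|exact: polyCD|exact: polyCM]. Qed.

Lemma rm_iB : rm iB.
Proof.
case: Hrm => H1 Ha Hm; split; rewrite /iB ?H1 // => a b; first by rewrite Ha polyCD.
by rewrite Hm polyCM.
Qed.

Section Lift.
Variable D : A -> A.
Hypotheses (Da : forall a b, D (a + b) = D a + D b)
  (Dl : forall a b, D (a * b) = a * D b + D a * b).
Let D0 : D 0 = 0 := der0 Da.

Lemma liftp_add p q : liftp D (p + q) = liftp D p + liftp D q.
Proof. by apply/polyP => k; rewrite coefD !coef_map_id0 // coefD Da. Qed.

Lemma liftp_mul p q : liftp D (p * q) = p * liftp D q + liftp D p * q.
Proof.
apply/polyP => k; rewrite coefD !coefM coef_map_id0 // coefM (add_sum _ _ Da) -big_split.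
apply: eq_bigr => j _; rewrite Dl !coef_map_id0 //.
Qed.

Lemma liftpC c : liftp D c%:P = (D c)%:P.
Proof. by apply/polyP => k; rewrite coef_map_id0 // !coefC; case: eqP. Qed.

Lemma liftpX : liftp D 'X = 0.
Proof.
apply/polyP => k; rewrite coef_map_id0 // coefX coef0.
by case: eqP => _; rewrite ?der1 ?D0.
Qed.
End Lift.

Lemma poly_core : good_core iB n.+1 xsB dsB.
Proof.
case: Hcore => Ha Hl Hi Hx; split.
- case=> [|i] Hi' a b /=; first by rewrite derivD.
  by apply: liftp_add; apply: Ha.
- case=> [|i] Hi' a b /=; first by rewrite derivM addrC mulrC.
  by apply: liftp_mul; [apply: Ha|apply: Hl].
- case=> [|i] Hi' v /=; first by rewrite /iB derivC.
  by rewrite /iB liftpC ?Hi // ?polyC0; apply: Ha.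
- case=> [|i] [|j] Hi' Hj /=.
  + by rewrite derivX.
  + by rewrite derivC.
  + by rewrite liftpX //; [apply: Ha|apply: Hl].
  + by rewrite liftpC ?Hx // ?polyC_natr //; apply: Ha.
Qed.

Lemma poly_all r : plike iB n.+1 xsB r.
Proof.
have HC a : plike iB n.+1 xsB a%:P.
  by apply: (plike_transfer rm_polyC) => //; apply: Hall.
rewrite -(coefK r) poly_def; apply: plike_sum => [|i]; first exact: rm_iB.
rewrite -mul_polyC; apply: pl_mul => //; apply: plike_exp; first exact: rm_iB.
by apply: (@pl_x _ _ _ _ _ 0%N).
Qed.

End PolyStep.


Section PserBasics.
Variable A : comNzRingType.
Implicit Types f g : pser A.

Lemma psaddE f g k : (f + g) k = f k + g k. Proof. by []. Qed.
Lemma psmulE f g k : (f * g) k = \sum_(i < k.+1) f i * g (k - i)%N. Proof. by []. Qed.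
Lemma ps1E k : (1 : pser A) k = (k == 0)%:R. Proof. by []. Qed.
Lemma ps0E k : (0 : pser A) k = 0. Proof. by []. Qed.

Lemma pssumE (I : Type) (s : seq I) (F : I -> pser A) k :
  (\sum_(i <- s) F i) k = \sum_(i <- s) F i k.
Proof. by elim: s => [|a s IH]; rewrite ?big_nil ?big_cons // psaddE IH. Qed.

Lemma psC_mulE a g k : (psC a * g) k = a * g k.
Proof.
rewrite psmulE big_ord_recl /= subn0 big1 ?addr0 // => i _.
by rewrite mul0r.
Qed.

Lemma rm_psC : rm (@psC A).
Proof.
split.
- by apply/funext => -[|k].
- by move=> a b; apply/funext => -[|k] //; rewrite psaddE /= addr0.
- move=> a b; apply/funext => k; rewrite psC_mulE.
  by case: k => [|k] //=; rewrite mulr0.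
Qed.

Definition psX : pser A := fun k => (k == 1)%:R.

Lemma psX_mulE g k : (psX * g) k = if k is k'.+1 then g k' else 0.
Proof.
rewrite psmulE big_ord_recl /= mul0r add0r.
case: k => [|k]; first by rewrite big_ord0.
rewrite big_ord_recl /= mul1r subSS subn0 big1 ?addr0 // => i _.
by rewrite /psX /bump /= mul0r.
Qed.

Lemma psXn_mulE N g k : (psX ^+ N * g) k = if (k < N)%N then 0 else g (k - N)%N.
Proof.
elim: N k => [|N IH] k; first by rewrite expr0 mul1r subn0.
by rewrite exprS -mulrA psX_mulE; case: k => [|k] //; rewrite ?IH ?ltnS ?subSS.
Qed.

Lemma ps_step (t : pser A) : t = psC (t 0%N) + psX * (fun k => t k.+1).
Proof.
apply/funext => k; rewrite psaddE psX_mulE.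
by case: k => [|k] /=; rewrite ?addr0 ?add0r.
Qed.

Lemma ps_decomp N (r : pser A) :
  r = \sum_(k < N) psC (r k) * psX ^+ k + psX ^+ N * (fun k => r (k + N)%N).
Proof.
elim: N => [|N IH].
  rewrite big_ord0 add0r expr0 mul1r.
  by apply/funext => k; rewrite addn0.
rewrite {1}IH big_ord_recr /=.
rewrite {1}(ps_step (fun k => r (k + N)%N)) /= add0n.
have -> : (fun k => r (k.+1 + N)%N) = (fun k => r (k + N.+1)%N).
  by apply/funext => k; rewrite addSnnS.
rewrite exprS; ring.
Qed.

Definition psD (f : pser A) : pser A := fun k => f k.+1 *+ k.+1.

Lemma psD_add f g : psD (f + g) = psD f + psD g.
Proof. by apply/funext => k; rewrite /psD !psaddE mulrnDl. Qed.

Lemma psD_mul f g : psD (f * g) = f * psD g + psD f * g.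
Proof.
apply/funext => k; rewrite /psD psaddE !psmulE -sumrMnl.
rewrite (eq_bigr (fun i : 'I_k.+2 => (f i * g (k.+1 - i)%N) *+ i +
    (f i * g (k.+1 - i)%N) *+ (k.+1 - i))); last first.
  by move=> i _; rewrite -mulrnDr subnKC // -ltnS.
rewrite big_split /= addrC; congr (_ + _).
  rewrite big_ord_recr /= subnn mulr0n addr0; apply: eq_bigr => i _.
  by rewrite /psD subSn ?mulrnAr // -ltnS.
rewrite big_ord_recl /= mulr0n add0r; apply: eq_bigr => i _.
by rewrite /bump /= add1n subSS mulrnAl.
Qed.

Lemma psD_C c : psD (psC c) = 0.
Proof. by apply/funext => k; rewrite /psD /= mul0rn. Qed.

Lemma psD_X : psD psX = 1.
Proof. by apply/funext => -[|k]; rewrite /psD /psX /= ?mul0rn. Qed.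

Definition psL (D : A -> A) (f : pser A) : pser A := fun k => D (f k).

Section L.
Variable D : A -> A.
Hypotheses (Da : forall a b, D (a + b) = D a + D b)
  (Dl : forall a b, D (a * b) = a * D b + D a * b).

Lemma psL_add f g : psL D (f + g) = psL D f + psL D g.
Proof. by apply/funext => k; rewrite /psL !psaddE Da. Qed.

Lemma psL_mul f g : psL D (f * g) = f * psL D g + psL D f * g.
Proof.
apply/funext => k; rewrite /psL psaddE !psmulE (add_sum _ _ Da) -big_split.
by apply: eq_bigr => i _; rewrite Dl.
Qed.

Lemma psL_C c : psL D (psC c) = psC (D c).
Proof. by apply/funext => -[|k]; rewrite /psL //= (der0 Da). Qed.

Lemma psL_X : psL D psX = 0.
Proof.
apply/funext => k; rewrite /psL /psX ps0E.
by case: eqP => _; rewrite ?(der1 Dl) ?(der0 Da).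
Qed.
End L.
End PserBasics.


Lemma rm_sum (A B : comNzRingType) (f : A -> B) (I : Type) (s : seq I) (F : I -> A) :
  rm f -> f (\sum_(i <- s) F i) = \sum_(i <- s) f (F i).
Proof.
move=> H; elim: s => [|a s IH]; first by rewrite !big_nil (rm0 H).
by case: H => _ Ha _; rewrite !big_cons Ha IH.
Qed.

Section PserStep.
Variables (V A : comNzRingType) (iA : V -> A) (n : nat) (xs : nat -> A) (ds : nat -> A -> A).
Hypotheses (Hrm : rm iA) (Hcore : good_core iA n xs ds)
  (Hap : approx iA n xs) (Hsep : sep n xs).

Definition iS : V -> pser A := fun v => psC (iA v).
Definition xsS : nat -> pser A := fun i => if i is i'.+1 then psC (xs i') else psX A.
Definition dsS : nat -> pser A -> pser A :=
  fun i => if i is i'.+1 then psL (ds i') else @psD A.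

Lemma rm_iS : rm iS.
Proof.
case: Hrm => H1 Ha Hm; case: (rm_psC A) => C1 Ca Cm.
by split; rewrite /iS ?H1 // => a b; rewrite ?Ha ?Hm.
Qed.

Lemma pser_core : good_core iS n.+1 xsS dsS.
Proof.
case: Hcore => Ha Hl Hi Hx; split.
- case=> [|i] Hi' a b /=; first by rewrite psD_add.
  exact: (psL_add (Ha i Hi')).
- case=> [|i] Hi' a b /=; first by rewrite psD_mul.
  exact: (psL_mul (Ha i Hi') (Hl i Hi')).
- case=> [|i] Hi' v /=; first by rewrite /iS psD_C.
  by rewrite /iS (psL_C (Ha i Hi')) Hi // (rm0 (rm_psC A)).
- case=> [|i] [|j] Hi' Hj /=.
  + by rewrite psD_X.
  + by rewrite psD_C.
  + by rewrite (psL_X (Ha i Hi') (Hl i Hi')).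
  + by rewrite (psL_C (Ha i Hi')) Hx // (rm_nat _ (rm_psC A)).
Qed.

Lemma pser_transfer a : plike iA n xs a -> plike iS n.+1 xsS (psC a).
Proof. by apply: (plike_transfer (rm_psC A)). Qed.

Lemma pser_approx : approx iS n.+1 xsS.
Proof.
move=> r N.
have claim : forall m, exists P, exists g : nat -> pser A, plike iS n.+1 xsS P /\
    \sum_(k < m) psC (r k) * psX A ^+ k = P + \sum_(i < n) psC (xs i) ^+ N * g i.
  elim=> [|m [P [g [HP E]]]].
    exists 0, (fun _ => 0); split; first by apply: plike0; apply: rm_iS.
    by rewrite big_ord0 big1 ?addr0 // => i _; rewrite mulr0.
  have [P' [g' [HP' E']]] := Hap (r m) N.
  exists (P + psC P' * psX A ^+ m), (fun i => g i + psC (g' i) * psX A ^+ m); split.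
    apply: pl_add => //; apply: pl_mul; first exact: pser_transfer.
    by apply: plike_exp; [apply: rm_iS|apply: (@pl_x _ _ _ _ _ 0%N)].
  rewrite big_ord_recr /= E E'.
  case: (rm_psC A) => C1 Ca Cm.
  rewrite Ca (rm_sum _ _ (rm_psC A)).
  have -> : \sum_(i < n) psC (xs i ^+ N * g' i) = \sum_(i < n) psC (xs i) ^+ N * psC (g' i).
    by apply: eq_bigr => i _; rewrite Cm (rm_exp _ _ (rm_psC A)).
  have -> : \sum_(i < n) psC (xs i) ^+ N * (g i + psC (g' i) * psX A ^+ m) =
      \sum_(i < n) psC (xs i) ^+ N * g i + (\sum_(i < n) psC (xs i) ^+ N * psC (g' i)) * psX A ^+ m.
    by rewrite mulr_suml -big_split; apply: eq_bigr => i _; rewrite mulrDr mulrA.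
  set S1 := \sum_(i < n) _; set S2 := \sum_(i < n) _.
  ring.
have [P [g [HP E]]] := claim N.
exists P, (fun i => if i is i'.+1 then g i' else (fun k => r (k + N)%N)); split => //.
rewrite {1}(ps_decomp N r) E big_ord_recl /=.
have -> : \sum_(i < n) psC (xs (0 + i)) ^+ N * g (0 + i)%N = \sum_(i < n) psC (xs i) ^+ N * g i by [].
by rewrite addrAC addrA.
Qed.

Lemma pser_sep : sep n.+1 xsS.
Proof.
move=> h Hh; apply/funext => k; rewrite ps0E; apply: Hsep => N.
set N' := maxn N k.+1.
have [g Eg] := Hh N'.
exists (fun i => xs i ^+ (N' - N) * g i.+1 k).
rewrite Eg pssumE big_ord_recl /= psXn_mulE.
have -> : (k < N')%N by rewrite /N' leq_max ltnSn orbT.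
rewrite add0r; apply: eq_bigr => i _.
rewrite -(rm_exp _ _ (rm_psC A)) psC_mulE mulrA -exprD subnKC //.
by rewrite /N' leq_maxl.
Qed.

End PserStep.


Lemma poly_tower (V : comNzRingType) n : rm (polynC V n) /\
  exists xs ds, good_core (polynC V n) n xs ds /\ forall r, plike (polynC V n) n xs r.
Proof.
elim: n => [|n [Hrm [xs [ds [Hc Hall]]]]].
  split; first by split.
  exists (fun _ => 0), (fun _ _ => 0); split; first by split.
  by move=> r; apply: (@pl_c _ _ (polynC V 0) 0 (fun _ => 0) r).
split; first exact: (rm_iB Hrm).
exists (xsB xs), (dsB ds); split; first exact: (poly_core Hc).
exact: (poly_all Hrm Hall).
Qed.

Lemma pser_tower (V : comNzRingType) n : rm (psernC V n) /\
  exists xs ds, good_core (psernC V n) n xs ds /\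
    approx (psernC V n) n xs /\ sep n xs.
Proof.
elim: n => [|n [Hrm [xs [ds [Hc [Hap Hsep]]]]]].
  split; first by split.
  exists (fun _ => 0), (fun _ _ => 0); split; first by split.
  split.
    move=> r N; exists r, (fun _ => 0); split; last by rewrite big_ord0 addr0.
    exact: (@pl_c _ _ (psernC V 0) 0 (fun _ => 0) r).
  by move=> h /(_ 0%N) [g ->]; rewrite big_ord0.
split; first exact: (rm_iS Hrm).
exists (xsS xs), (dsS ds); split; first exact: (pser_core Hc).
split; first exact: (pser_approx Hrm Hap).
exact: (pser_sep Hsep).
Qed.

Lemma tower (V : comNzRingType) b n : rm (Rmap b V n) /\
  exists xs ds, good_core (Rmap b V n) n xs ds /\ Final (Rmap b V n) n xs.
Proof.
case: b => /=.
  have [Hrm [xs [ds [Hc Hall]]]] := poly_tower V n.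
  by split=> //; exists xs, ds; split=> //; apply: Final_all.
have [Hrm [xs [ds [Hc [Hap Hsep]]]]] := pser_tower V n.
by split=> //; exists xs, ds; split=> //; apply: Final_sep.
Qed.

Theorem lemma3p3 (V : idomainType) (pi : V) (p : nat) (b : ring_kind) (n : nat)
  (hV : is_DVR_with_uniformizer V pi) (h0 : char_zero V)
  (hp : prime p) (hres : residue_char V pi p)
  (M : DModule (Rmap b V n)) :
  is_D_submodule (Rmap b V n)
    (saturation (Rmap b V n) pi (annihilator M)).
Proof.
have [Hrm [xs [ds [[Ha Hl Hi Hx] Hfin]]]] := tower V b n.
have Hkey : forall a d, annihilator M a -> diffop (Rmap b V n) d ->
    exists N, (0 < N)%N /\ annihilator M (N%:R * d a).
  move=> a d HA Hd; apply: (key (n := n) (xs := xs) (ds := ds)) => //.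
  by move=> i Hi'; apply: der_diffop; [apply: Ha|apply: Hl|apply: Hi].
split.
- by exists 0%N; rewrite mul0r; apply: ann_0.
- move=> a c [m HA] [l HC]; exists (m + l)%N.
  rewrite (_ : (a + c) * _ = Rmap b V n pi ^+ l * (a * Rmap b V n pi ^+ m) +
     Rmap b V n pi ^+ m * (c * Rmap b V n pi ^+ l)); last by rewrite exprD; ring.
  by apply: ann_add; apply: ann_mull.
- move=> d a Hd [m HA].
  have [N [HN HNa]] := Hkey _ d HA Hd.
  have HdV := diffop_lin Hd.
  case: hV => _ _ Hdec.
  have [u [j [Hu Hnu]]] := Hdec _ (h0 N HN).
  exists (m + j)%N.
  have E1 : d (a * Rmap b V n pi ^+ m) = Rmap b V n (pi ^+ m) * d a.
    by rewrite mulrC -(rm_exp _ _ Hrm) HdV.2.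
  rewrite E1 in HNa.
  have E2 : (N%:R : Rring b V n) = Rmap b V n u * Rmap b V n pi ^+ j.
    have [_ _ Hm] := Hrm; by rewrite -(rm_nat _ Hrm) Hnu Hm (rm_exp _ _ Hrm).
  have E3 : Rmap b V n u^-1 * Rmap b V n u = 1.
    by have [H1 _ Hm] := Hrm; rewrite -Hm mulVr.
  rewrite (_ : d a * _ = Rmap b V n u^-1 * (N%:R * (Rmap b V n (pi ^+ m) * d a))).
    exact: ann_mull.
  rewrite E2 (rm_exp _ _ Hrm) exprD.
  transitivity ((Rmap b V n u^-1 * Rmap b V n u) * (d a * (Rmap b V n pi ^+ m * Rmap b V n pi ^+ j))).
    by rewrite E3 mul1r.
  ring.
Qed.
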